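(* For every $n\in\mathbb{Z}^+$ we have $$N(1,1,6;2n)=N(1,1,3;n),\qquad t(1,1,6;8n+4)=2t(1,1,3;n),\qquad t(1,1,6;32n+19)=4t(1,1,3;n).$$ Moreover, for every $n\in\mathbb{Z}^+$ with $n\not\equiv 15\pmod{16}$ we have $$t(1,1,6;n)=\begin{cases} 4N(1,1,3;n+1)&\text{if } n\equiv 1,2\pmod 4,\\ 2N(1,1,3;n+1)&\text{if } n\equiv 0\pmod 8,\\ N(1,1,3;n+1)&\text{if } n\equiv 4\pmod 8 \text{ or } n\equiv 19\pmod{32},\\ \frac 85N(1,1,3;n+1)&\text{if } n\equiv 7,11\pmod{16},\\ \frac 43N(1,1,3;n+1)&\text{if } n\equiv 3\pmod{32}.\end{cases}$$
   Context: $\mathbb{Z}^+$ is the set of positive integers. For $a,b,c\in\mathbb{Z}^+$ and nonnegative integer $n$, $N(a,b,c;n)$ denotes the number of triples $(x,y,z)\in\mathbb{Z}^3$ with $n=ax^2+by^2+cz^2$, and $t(a,b,c;n)$ denotes the number of triples $(x,y,z)\in\mathbb{Z}^3$ with $n=a\frac{x(x+1)}2+b\frac{y(y+1)}2+c\frac{z(z+1)}2$. *)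

(* Defs.v *)
From mathcomp Require Import all_boot all_order all_algebra.
Set Implicit Arguments. Unset Strict Implicit. Unset Printing Implicit Defensive.
Import Order.TTheory GRing.Theory Num.Theory.
Local Open Scope ring_scope.

Definition zbox (m : nat) : seq int :=
  [seq (i%:Z - m%:Z) | i <- iota 0 (2 * m + 1)].

(* Number of (x,y,z) in Z^3 with n = a x^2 + b y^2 + c z^2.
   For a,b,c >= 1 every solution satisfies |x|,|y|,|z| <= n, so
   enumerating the box [-n,n]^3 counts all of Z^3. *)
Definition N (a b c n : nat) : nat :=
  (\sum_(x <- zbox n) \sum_(y <- zbox n) \sum_(z <- zbox n)
     nat_of_bool ((a%:Z * x ^+ 2 + b%:Z * y ^+ 2 + c%:Z * z ^+ 2 == n%:Z)%R))%N.

Definition tri (x : int) : int := ((x * (x + 1)) %/ 2)%Z.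

(* Number of (x,y,z) in Z^3 with n = a T(x) + b T(y) + c T(z).
   For a,b,c >= 1 every solution has |x|,|y|,|z| <= n+1 (since
   T(x) > n whenever |x| >= n+2), so the box [-(n+1),n+1]^3 suffices. *)
Definition t (a b c n : nat) : nat :=
  (\sum_(x <- zbox n.+1) \sum_(y <- zbox n.+1) \sum_(z <- zbox n.+1)
     nat_of_bool ((a%:Z * tri x + b%:Z * tri y + c%:Z * tri z == n%:Z)%R))%N.

(* Main.v *)
Require Import Defs.
From mathcomp Require Import all_boot all_order all_algebra.
Import Order.TTheory GRing.Theory Num.Theory.
From mathcomp Require Import zify ring lra.

Module Helpers.
Set Implicit Arguments. Unset Strict Implicit. Unset Printing Implicit Defensive.
Local Open Scope ring_scope.

Definition V := (int * int * int)%type.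
Definition bx (B : nat) : seq V :=
  [seq (p, z) | p <- [seq (x, y) | x <- zbox B, y <- zbox B], z <- zbox B].
Definition cnt (B : nat) (P : pred V) : nat := count P (bx B).

Lemma mem_zbox B x : (x \in zbox B) = (- B%:Z <= x <= B%:Z).
Proof.
apply/mapP/idP.
  by case=> i; rewrite mem_iota => /andP[_ hi] ->; lia.
move=> h; exists (absz (x + B%:Z)); last by lia.
by rewrite mem_iota; lia.
Qed.

Lemma uniq_zbox B : uniq (zbox B).
Proof. rewrite map_inj_uniq ?iota_uniq // => i j; lia. Qed.

Lemma mem_bx B (v : V) : (v \in bx B) =
  [&& - B%:Z <= v.1.1 <= B%:Z, - B%:Z <= v.1.2 <= B%:Z & - B%:Z <= v.2 <= B%:Z].
Proof.
case: v => [[x y] z] /=.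
apply/allpairsP/idP.
  case=> [[p w]] /= [hp hw e]; case: e => ep ew; subst p w.
  move/allpairsP: hp => [[a b] /= [ha hb e]]; case: e => ea eb; subst a b.
  by rewrite /= -!mem_zbox ha hb hw.
case/and3P => hx hy hz; exists ((x, y), z) => /=; split => //.
by apply/allpairsP; exists (x, y); rewrite /= !mem_zbox hx hy.
by rewrite mem_zbox.
Qed.

Lemma uniq_bx B : uniq (bx B).
Proof.
apply: allpairs_uniq; rewrite ?uniq_zbox //.
  apply: allpairs_uniq; rewrite ?uniq_zbox //.
  by move=> [a b] [c d] _ _ /=.
by move=> [a b] [c d] _ _ /=.
Qed.

Lemma sum3_cnt B (F : int -> int -> int -> bool) :
  (\sum_(x <- zbox B) \sum_(y <- zbox B) \sum_(z <- zbox B) nat_of_bool (F x y z))%N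
  = cnt B (fun v => F v.1.1 v.1.2 v.2).
Proof.
rewrite /cnt -sumn_count sumnE big_map /bx big_allpairs big_allpairs //.
Qed.

Lemma cnt_le B1 B2 (P1 P2 : pred V) (f : V -> V) :
  (forall v, P1 v -> P2 (f v)) -> (forall v w, P1 v -> P1 w -> f v = f w -> v = w) ->
  (forall v, P2 v -> v \in bx B2) -> (cnt B1 P1 <= cnt B2 P2)%N.
Proof.
move=> hP hinj hB; rewrite /cnt -!size_filter.
rewrite -(size_map f); apply: uniq_leq_size.
  rewrite map_inj_in_uniq ?filter_uniq ?uniq_bx //.
  by move=> v w; rewrite !mem_filter => /andP[hv _] /andP[hw _]; apply: hinj.
move=> u /mapP [v]; rewrite mem_filter => /andP[hv _] ->.
by rewrite mem_filter hP // hB // hP.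
Qed.

Lemma cnt_eq B1 B2 (P1 P2 : pred V) (f g : V -> V) :
  (forall v, P1 v -> P2 (f v)) -> (forall v w, P1 v -> P1 w -> f v = f w -> v = w) ->
  (forall v, P2 v -> P1 (g v)) -> (forall v w, P2 v -> P2 w -> g v = g w -> v = w) ->
  (forall v, P1 v -> v \in bx B1) -> (forall v, P2 v -> v \in bx B2) ->
  cnt B1 P1 = cnt B2 P2.
Proof.
move=> h1 h2 h3 h4 h5 h6; apply/eqP; rewrite eqn_leq.
by rewrite (cnt_le B1 h1 h2 h6) (cnt_le B2 h3 h4 h5).
Qed.

Lemma cnt_split B (P c : pred V) :
  cnt B P = (cnt B (fun v => P v && c v) + cnt B (fun v => P v && ~~ c v))%N.
Proof.
rewrite /cnt; elim: (bx B) => //= v s ->.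
by case: (P v); case: (c v) => /=; lia.
Qed.

Lemma cnt_ext B (P1 P2 : pred V) : (forall v, P1 v = P2 v) -> cnt B P1 = cnt B P2.
Proof. by move=> h; apply: eq_count. Qed.

Definition od (x : int) : bool := (x %% 2 == 1)%Z.

Lemma Rlem (H : int -> int -> bool) B B' :
  (forall v : V, [&& od v.1.1, od v.2 & H (v.1.1^+2 + 3 * v.2^+2) v.1.2] -> v \in bx B) ->
  (forall v : V, od (v.1.1 + v.2) && H (4 * (v.1.1^+2 + 3 * v.2^+2)) v.1.2 -> v \in bx B') ->
  cnt B (fun v => [&& od v.1.1, od v.2 & H (v.1.1^+2 + 3 * v.2^+2) v.1.2]) =
  muln 2 (cnt B' (fun v => od (v.1.1 + v.2) && H (4 * (v.1.1^+2 + 3 * v.2^+2)) v.1.2)).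
Proof.
move=> hB hB'.
rewrite (cnt_split _ _ (fun v => ((v.1.1 - v.2) %% 4 == 0)%Z)) mul2n -addnn.
congr addn.
- apply: (cnt_eq (f := fun v => (divz (v.1.1 + 3 * v.2) 4, v.1.2, divz (v.2 - v.1.1) 4))
                 (g := fun v => (v.1.1 - 3 * v.2, v.1.2, v.1.1 + v.2))).
  + move=> [[x y] z] /= /andP[/and3P[hx hz hH] hm].
    have [a [b [ex ez]]] : exists a b, x = a - 3 * b /\ z = a + b.
      exists (divz (x + 3 * z) 4), (divz (z - x) 4); move: hx hz hm; rewrite /od; lia.
    subst x z.
    have -> : divz (a - 3 * b + 3 * (a + b)) 4 = a by lia.
    have -> : divz (a + b - (a - 3 * b)) 4 = b by lia.
    move: hx hz; rewrite /od => hx hz.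
    have e : (a - 3 * b) ^+ 2 + 3 * (a + b) ^+ 2 = 4 * (a ^+ 2 + 3 * b ^+ 2) by ring.
    rewrite e in hH.
    rewrite hH andbT; lia.
  + move=> [[x y] z] [[x' y'] z'] /= /andP[/and3P[hx hz _] hm] /andP[/and3P[hx' hz' _] hm'] [e1 e2 e3].
    move: hx hz hm hx' hz' hm'; rewrite /od => hx hz hm hx' hz' hm'.
    subst y'; congr (_, _, _); lia.
  + move=> [[a y] b] /= /andP[hab hH].
    have -> : (a - 3 * b) ^+ 2 + 3 * (a + b) ^+ 2 = 4 * (a ^+ 2 + 3 * b ^+ 2) by ring.
    rewrite hH; move: hab; rewrite /od; lia.
  + move=> [[a y] b] [[a' y'] b'] /= _ _ [e1 e2 e3]; subst y'; congr (_, _, _); lia.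
  + by move=> v /andP[h _]; apply: hB.
  + exact: hB'.
- apply: (cnt_eq (f := fun v => (divz (v.1.1 - 3 * v.2) 4, v.1.2, divz (v.1.1 + v.2) 4))
                 (g := fun v => (v.1.1 + 3 * v.2, v.1.2, v.2 - v.1.1))).
  + move=> [[x y] z] /= /andP[/and3P[hx hz hH] hm].
    have [a [b [ex ez]]] : exists a b, x = a + 3 * b /\ z = b - a.
      exists (divz (x - 3 * z) 4), (divz (x + z) 4); move: hx hz hm; rewrite /od; lia.
    subst x z.
    have -> : divz (a + 3 * b - 3 * (b - a)) 4 = a by lia.
    have -> : divz (a + 3 * b + (b - a)) 4 = b by lia.
    move: hx hz hm; rewrite /od => hx hz hm.
    have e : (a + 3 * b) ^+ 2 + 3 * (b - a) ^+ 2 = 4 * (a ^+ 2 + 3 * b ^+ 2) by ring.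
    rewrite e in hH.
    rewrite hH andbT; lia.
  + move=> [[x y] z] [[x' y'] z'] /= /andP[/and3P[hx hz _] hm] /andP[/and3P[hx' hz' _] hm'] [e1 e2 e3].
    move: hx hz hm hx' hz' hm'; rewrite /od => hx hz hm hx' hz' hm'.
    subst y'; congr (_, _, _); lia.
  + move=> [[a y] b] /= /andP[hab hH].
    have -> : (a + 3 * b) ^+ 2 + 3 * (b - a) ^+ 2 = 4 * (a ^+ 2 + 3 * b ^+ 2) by ring.
    rewrite hH; move: hab; rewrite /od; lia.
  + move=> [[a y] b] [[a' y'] b'] /= _ _ [e1 e2 e3]; subst y'; congr (_, _, _); lia.
  + by move=> v /andP[h _]; apply: hB.
  + exact: hB'.
Qed.

Lemma sqf (x : int) : ((x %% 2 = 0)%Z /\ (x^+2 %% 4 = 0)%Z) \/ ((x %% 2 = 1)%Z /\ (x^+2 %% 8 = 1)%Z).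
Proof.
have [k [j [e hj]]] : exists k j, x = 4 * k + j /\ (j = 0 \/ j = 1 \/ j = 2 \/ j = 3).
  exists (divz x 4), (x %% 4)%Z; lia.
subst x; case: hj => [-> | [-> | [-> | ->]]].
all: try (have -> : (4 * k + 0) ^+ 2 = 4 * (4 * k^+2) by ring).
all: try (have -> : (4 * k + 1) ^+ 2 = 8 * (2 * k^+2 + k) + 1 by ring).
all: try (have -> : (4 * k + 2) ^+ 2 = 4 * (4 * k^+2 + 4 * k + 1) by ring).
all: try (have -> : (4 * k + 3) ^+ 2 = 8 * (2 * k^+2 + 3 * k + 1) + 1 by ring).
all: lia.
Qed.

Lemma sq2 x : (x^+2 %% 2 = x %% 2)%Z.
Proof. have := sqf x; lia. Qed.
Lemma sq8 x : od x -> (x^+2 %% 8 = 1)%Z.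
Proof. rewrite /od; have := sqf x; lia. Qed.

Definition Qf (v : V) : int := v.1.1^+2 + v.1.2^+2 + 3 * v.2^+2.
Definition Nm (m : nat) := cnt m (fun v => Qf v == m%:Z).
Definition Pm (m : nat) := cnt m (fun v => (Qf v == m%:Z) && od (v.1.1 + v.2)).

Lemma Qbound (m : nat) (v : V) : Qf v = m%:Z -> v \in bx m.
Proof. case: v => [[x y] z]; rewrite /Qf mem_bx /= => h; nia. Qed.

Ltac par x y z := rewrite /Qf /od /=; have := sqf x; have := sqf y; have := sqf z; lia.

Lemma bndQ (m : nat) (P : pred V) v : (Qf v == m%:Z) && P v -> v \in bx m.
Proof. by move=> /andP[/eqP h _]; apply: Qbound. Qed.

Lemma E_lem m : cnt (4 * m)%N (fun v => (Qf v == (4 * m)%N%:Z) && [&& ~~ od v.1.1, ~~ od v.1.2 & ~~ od v.2]) = Nm m.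
Proof.
apply: (cnt_eq (f := fun v => (divz v.1.1 2, divz v.1.2 2, divz v.2 2))
               (g := fun v => (2 * v.1.1, 2 * v.1.2, 2 * v.2))).
- move=> [[x y] z] /= /andP[hq hp].
  have [a [b [c [ex ey ez]]]] : exists a b c, [/\ x = 2 * a, y = 2 * b & z = 2 * c].
    exists (divz x 2), (divz y 2), (divz z 2); move: hp; rewrite /od; split; lia.
  subst x y z.
  have -> : divz (2 * a) 2 = a by lia.
  have -> : divz (2 * b) 2 = b by lia.
  have -> : divz (2 * c) 2 = c by lia.
  move: hq; rewrite /Qf /=.
  have -> : (2 * a) ^+ 2 + (2 * b) ^+ 2 + 3 * (2 * c) ^+ 2 = 4 * (a ^+ 2 + b ^+ 2 + 3 * c ^+ 2) by ring.
  lia.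
- move=> [[x y] z] [[x' y'] z'] /= /andP[_ hp] /andP[_ hp'] [e1 e2 e3].
  move: hp hp'; rewrite /od => hp hp'; congr (_, _, _); lia.
- move=> [[a b] c] /=; rewrite /Qf /od /=.
  have -> : (2 * a) ^+ 2 + (2 * b) ^+ 2 + 3 * (2 * c) ^+ 2 = 4 * (a ^+ 2 + b ^+ 2 + 3 * c ^+ 2) by ring.
  lia.
- move=> [[a b] c] [[a' b'] c'] /= _ _ [e1 e2 e3]; congr (_, _, _); lia.
- exact: bndQ.
- by move=> v /eqP h; apply: Qbound.
Qed.

Lemma Sx_lem m : cnt (4 * m)%N (fun v => (Qf v == (4 * m)%N%:Z) && [&& od v.1.1, ~~ od v.1.2 & od v.2]) = muln 2 (Pm m).
Proof.
pose H := fun (s y : int) => (s + y ^+ 2 == (4 * m)%N%:Z) && ~~ od y.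
have -> : cnt (4 * m)%N (fun v => (Qf v == (4 * m)%N%:Z) && [&& od v.1.1, ~~ od v.1.2 & od v.2]) =
  cnt (4 * m)%N (fun v => [&& od v.1.1, od v.2 & H (v.1.1^+2 + 3 * v.2^+2) v.1.2]).
  apply: cnt_ext => [[[x y] z]]; rewrite /H /Qf /od /=; lia.
rewrite (Rlem (B' := (4 * m)%N)).
- congr muln.
  apply: (cnt_eq (f := fun v => (v.1.1, divz v.1.2 2, v.2))
                 (g := fun v => (v.1.1, 2 * v.1.2, v.2))).
  + move=> [[x y] z] /=; rewrite /H /Qf /od /= => /andP[hxz /andP[hq hy]].
    have [b eb] : exists b, y = 2 * b by (exists (divz y 2); lia).
    subst y; have -> : divz (2 * b) 2 = b by lia.
    have e : (2 * b) ^+ 2 = 4 * b ^+ 2 by ring.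
    rewrite e in hq; lia.
  + move=> [[x y] z] [[x' y'] z'] /=; rewrite /H /od => /andP[_ /andP[_ hy]] /andP[_ /andP[_ hy']] [e1 e2 e3].
    congr (_, _, _); lia.
  + move=> [[x y] z] /=; rewrite /H /Qf /od /=.
    have -> : (2 * y) ^+ 2 = 4 * y ^+ 2 by ring.
    lia.
  + move=> [[a b] c] [[a' b'] c'] /= _ _ [e1 e2 e3]; congr (_, _, _); lia.
  + move=> [[x y] z]; rewrite /H /= => /andP[_ /andP[/eqP h _]]; rewrite mem_bx /=; nia.
  + exact: bndQ.
- move=> [[x y] z]; rewrite /H /= => /and3P[_ _ /andP[/eqP h _]]; rewrite mem_bx /=; nia.
- move=> [[x y] z]; rewrite /H /= => /andP[_ /andP[/eqP h _]]; rewrite mem_bx /=; nia.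
Qed.

Lemma Sy_lem m : cnt (4 * m)%N (fun v => (Qf v == (4 * m)%N%:Z) && [&& ~~ od v.1.1, od v.1.2 & od v.2]) = muln 2 (Pm m).
Proof.
rewrite -Sx_lem.
apply: (cnt_eq (f := fun v => (v.1.2, v.1.1, v.2)) (g := fun v => (v.1.2, v.1.1, v.2))).
- move=> [[x y] z]; rewrite /Qf /=; lia.
- by move=> [[x y] z] [[x' y'] z'] /= _ _ [-> -> ->].
- move=> [[x y] z]; rewrite /Qf /=; lia.
- by move=> [[x y] z] [[x' y'] z'] /= _ _ [-> -> ->].
- exact: bndQ.
- exact: bndQ.
Qed.

Lemma I4 m : Nm (4 * m)%N = (Nm m + 4 * Pm m)%N.
Proof.
rewrite /Nm (cnt_split _ _ (fun v => [&& ~~ od v.1.1, ~~ od v.1.2 & ~~ od v.2])).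
rewrite E_lem (cnt_split _ (fun v => _ && _) (fun v => od v.1.1)).
have e1 : cnt (4 * m)%N (fun v => ((Qf v == (4 * m)%N%:Z) && ~~ [&& ~~ od v.1.1, ~~ od v.1.2 & ~~ od v.2]) && od v.1.1)
  = cnt (4 * m)%N (fun v => (Qf v == (4 * m)%N%:Z) && [&& od v.1.1, ~~ od v.1.2 & od v.2]).
  by apply: cnt_ext => [[[x y] z]]; par x y z.
have e2 : cnt (4 * m)%N (fun v => ((Qf v == (4 * m)%N%:Z) && ~~ [&& ~~ od v.1.1, ~~ od v.1.2 & ~~ od v.2]) && ~~ od v.1.1)
  = cnt (4 * m)%N (fun v => (Qf v == (4 * m)%N%:Z) && [&& ~~ od v.1.1, od v.1.2 & od v.2]).
  by apply: cnt_ext => [[[x y] z]]; par x y z.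
rewrite e1 e2 Sx_lem Sy_lem -/(Nm m); lia.
Qed.

Lemma I5 m : Pm (4 * m)%N = muln 2 (Pm m).
Proof.
rewrite -Sy_lem /Pm; apply: cnt_ext => [[[x y] z]]; par x y z.
Qed.

Lemma A5 m : (m %% 8 = 5)%N ->
  cnt m (fun v => (Qf v == m%:Z) && [&& od v.1.1, od v.1.2 & od v.2]) = muln 2 (Pm m).
Proof.
move=> hm.
pose H := fun (s y : int) => (s + y ^+ 2 == m%:Z) && od y.
have -> : cnt m (fun v => (Qf v == m%:Z) && [&& od v.1.1, od v.1.2 & od v.2]) =
  cnt m (fun v => [&& od v.1.1, od v.2 & H (v.1.1^+2 + 3 * v.2^+2) v.1.2]).
  apply: cnt_ext => [[[x y] z]]; rewrite /H /Qf /od /=; lia.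
rewrite (Rlem (B' := m)).
- congr muln.
  apply: (cnt_eq (f := fun v => (v.1.2, 2 * v.1.1, 2 * v.2))
                 (g := fun v => (divz v.1.2 2, v.1.1, divz v.2 2))).
  + move=> [[a y] b] /=; rewrite /H /Qf /od /=.
    have -> : (2 * a) ^+ 2 = 4 * a ^+ 2 by ring.
    have -> : (2 * b) ^+ 2 = 4 * b ^+ 2 by ring.
    lia.
  + move=> [[x y] z] [[x' y'] z'] /= _ _ [e1 e2 e3]; congr (_, _, _); lia.
  + move=> [[x y] z] /= hP.
    have hp : [&& od x, ~~ od y & ~~ od z] by move: hP; par x y z.
    move: hP hp; rewrite /H /Qf /od /= => /andP[hq _] hp.
    have [a [b [ey ez]]] : exists a b, y = 2 * a /\ z = 2 * b.
      by exists (divz y 2), (divz z 2); split; lia.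
    subst y z.
    have -> : divz (2 * a) 2 = a by lia.
    have -> : divz (2 * b) 2 = b by lia.
    have e : (2 * a) ^+ 2 = 4 * a ^+ 2 by ring.
    have e' : (2 * b) ^+ 2 = 4 * b ^+ 2 by ring.
    rewrite e e' in hq.
    move/and3P: hp => [hx _ _].
    have h8 := sq8 hx.
    have ha := sq2 a.
    have hb := sq2 b.
    clear -hq h8 ha hb hm; lia.
  + move=> [[x y] z] [[x' y'] z'] /= hP hP' [e1 e2 e3].
    have : [&& od x, ~~ od y & ~~ od z] by move: hP; par x y z.
    have : [&& od x', ~~ od y' & ~~ od z'] by move: hP'; par x' y' z'.
    rewrite /od => h1 h2; congr (_, _, _); lia.
  + move=> [[x y] z]; rewrite /H /= => /andP[_ /andP[/eqP h _]]; rewrite mem_bx /=; nia.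
  + exact: bndQ.
- move=> [[x y] z]; rewrite /H /= => /and3P[_ _ /andP[/eqP h _]]; rewrite mem_bx /=; nia.
- move=> [[x y] z]; rewrite /H /= => /andP[_ /andP[/eqP h _]]; rewrite mem_bx /=; nia.
Qed.

Lemma P23 m : ((m %% 4 = 2) \/ (m %% 4 = 3))%N -> Pm m = Nm m.
Proof. move=> hm; apply: cnt_ext => [[[x y] z]]; par x y z. Qed.

Lemma P1 m : (m %% 8 = 1)%N -> Nm m = muln 2 (Pm m).
Proof.
move=> hm; rewrite /Nm (cnt_split _ _ (fun v => od (v.1.1 + v.2))) -/(Pm m) mul2n -addnn.
congr addn.
apply: (cnt_eq (f := fun v => (v.1.2, v.1.1, v.2)) (g := fun v => (v.1.2, v.1.1, v.2))).
- move=> [[x y] z] /=; par x y z.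
- by move=> [[x y] z] [[x' y'] z'] /= _ _ [-> -> ->].
- move=> [[x y] z] /=; par x y z.
- by move=> [[x y] z] [[x' y'] z'] /= _ _ [-> -> ->].
- exact: bndQ.
- exact: bndQ.
Qed.

Lemma P5 m : (m %% 8 = 5)%N -> Nm m = muln 4 (Pm m).
Proof.
move=> hm; rewrite /Nm (cnt_split _ _ (fun v => od (v.1.1 + v.2))) -/(Pm m).
rewrite (cnt_split _ (fun v => _ && _) (fun v => od v.2)).
have -> : cnt m (fun v => ((Qf v == m%:Z) && ~~ od (v.1.1 + v.2)) && od v.2) =
   cnt m (fun v => (Qf v == m%:Z) && [&& od v.1.1, od v.1.2 & od v.2]).
  by apply: cnt_ext => [[[x y] z]]; par x y z.
rewrite A5 //.
have -> : cnt m (fun v => ((Qf v == m%:Z) && ~~ od (v.1.1 + v.2)) && ~~ od v.2) = Pm m.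
  apply: (cnt_eq (f := fun v => (v.1.2, v.1.1, v.2)) (g := fun v => (v.1.2, v.1.1, v.2))).
  - move=> [[x y] z] /=; par x y z.
  - by move=> [[x y] z] [[x' y'] z'] /= _ _ [-> -> ->].
  - move=> [[x y] z] /=; par x y z.
  - by move=> [[x y] z] [[x' y'] z'] /= _ _ [-> -> ->].
  - by move=> v /andP[/andP[/eqP h _] _]; apply: Qbound.
  - exact: bndQ.
lia.
Qed.

Lemma tri2 x : 2 * tri x = x * (x + 1).
Proof.
rewrite /tri; have e : x * (x + 1) = x ^+ 2 + x by ring.
rewrite e; have := sq2 x; lia.
Qed.

Lemma tri_bnd x : 0 <= tri x /\ - tri x - 1 <= x <= tri x.
Proof. have := tri2 x; nia. Qed.

Lemma Ncnt a b c n : N a b c n =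
  cnt n (fun v => a%:Z * v.1.1 ^+ 2 + b%:Z * v.1.2 ^+ 2 + c%:Z * v.2 ^+ 2 == n%:Z).
Proof. by rewrite /N sum3_cnt. Qed.

Lemma tcnt a b c n : t a b c n =
  cnt n.+1 (fun v => a%:Z * tri v.1.1 + b%:Z * tri v.1.2 + c%:Z * tri v.2 == n%:Z).
Proof. by rewrite /t sum3_cnt. Qed.

Lemma N113 n : N 1 1 3 n = Nm n.
Proof. rewrite Ncnt; apply: cnt_ext => [[[x y] z]]; rewrite /Qf /=; lia. Qed.

Lemma I1 n : N 1 1 6 (2 * n)%N = N 1 1 3 n.
Proof.
rewrite !Ncnt.
apply: (cnt_eq (f := fun v => (divz (v.1.1 + v.1.2) 2, divz (v.1.1 - v.1.2) 2, v.2))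
               (g := fun v => (v.1.1 + v.1.2, v.1.1 - v.1.2, v.2))).
- move=> [[x y] z] /= /eqP h.
  have hp : ((x + y) %% 2 = 0)%Z by have := sq2 x; have := sq2 y; lia.
  have [u [w [ex ey]]] : exists u w, x = u + w /\ y = u - w.
    by exists (divz (x + y) 2), (divz (x - y) 2); split; lia.
  subst x y.
  have -> : divz (u + w + (u - w)) 2 = u by lia.
  have -> : divz (u + w - (u - w)) 2 = w by lia.
  have e : 1%:Z * (u + w) ^+ 2 + 1%:Z * (u - w) ^+ 2 + 6%:Z * z ^+ 2 = 2 * (u ^+ 2 + w ^+ 2 + 3 * z ^+ 2) by ring.
  rewrite e in h; lia.
- move=> [[x y] z] [[x' y'] z'] /= /eqP h /eqP h' [e1 e2 e3].
  have hp : ((x + y) %% 2 = 0)%Z by have := sq2 x; have := sq2 y; lia.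
  have hp' : ((x' + y') %% 2 = 0)%Z by have := sq2 x'; have := sq2 y'; lia.
  congr (_, _, _); lia.
- move=> [[u w] z] /= /eqP h.
  have e : 1%:Z * (u + w) ^+ 2 + 1%:Z * (u - w) ^+ 2 + 6%:Z * z ^+ 2 = 2 * (u ^+ 2 + w ^+ 2 + 3 * z ^+ 2) by ring.
  rewrite e; lia.
- move=> [[x y] z] [[x' y'] z'] /= _ _ [e1 e2 e3]; congr (_, _, _); lia.
- move=> [[x y] z] /= /eqP h; rewrite mem_bx /=; nia.
- move=> [[x y] z] /= /eqP h; rewrite mem_bx /=; nia.
Qed.

Lemma I2 n : t 1 1 6 n = muln 4 (Pm n.+1).
Proof.
rewrite tcnt.
have -> : cnt n.+1 (fun v => 1%:Z * tri v.1.1 + 1%:Z * tri v.1.2 + 6%:Z * tri v.2 == n%:Z) =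
  cnt (4 * n.+1)%N (fun v => (Qf v == (4 * n.+1)%N%:Z) && (od (v.1.1 + v.1.2) && od v.2)).
  apply: (cnt_eq (f := fun v => (v.1.1 + v.1.2 + 1, v.1.1 - v.1.2, 2 * v.2 + 1))
                 (g := fun v => (divz (v.1.1 + v.1.2 - 1) 2, divz (v.1.1 - v.1.2 - 1) 2, divz (v.2 - 1) 2))).
  - move=> [[x y] z] /= /eqP h; rewrite /Qf /od /=.
    have e : (x + y + 1) ^+ 2 + (x - y) ^+ 2 + 3 * (2 * z + 1) ^+ 2 =
      (x * (x + 1)) + (x * (x + 1)) + (y * (y + 1)) + (y * (y + 1)) + 6 * (z * (z + 1)) + 6 * (z * (z + 1)) + 4 by ring.
    rewrite e -!tri2; lia.
  - move=> [[x y] z] [[x' y'] z'] /= _ _ [e1 e2 e3]; congr (_, _, _); lia.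
  - move=> [[u w] Z] /=; rewrite /Qf /od /= => /andP[/eqP h /andP[h1 h2]].
    have [x [y [z [eu ew eZ]]]] : exists x y z, [/\ u = x + y + 1, w = x - y & Z = 2 * z + 1].
      by exists (divz (u + w - 1) 2), (divz (u - w - 1) 2), (divz (Z - 1) 2); split; lia.
    subst u w Z.
    have -> : divz (x + y + 1 + (x - y) - 1) 2 = x by lia.
    have -> : divz (x + y + 1 - (x - y) - 1) 2 = y by lia.
    have -> : divz (2 * z + 1 - 1) 2 = z by lia.
    have e : (x + y + 1) ^+ 2 + (x - y) ^+ 2 + 3 * (2 * z + 1) ^+ 2 =
      (x * (x + 1)) + (x * (x + 1)) + (y * (y + 1)) + (y * (y + 1)) + 6 * (z * (z + 1)) + 6 * (z * (z + 1)) + 4 by ring.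
    rewrite e -!tri2 in h; lia.
  - move=> [[x y] z] [[x' y'] z'] /=; rewrite /od => /andP[_ /andP[h1 h2]] /andP[_ /andP[h1' h2']] [e1 e2 e3].
    congr (_, _, _); lia.
  - move=> [[x y] z] /= /eqP h; rewrite mem_bx /=.
    have := tri_bnd x; have := tri_bnd y; have := tri_bnd z; lia.
  - move=> v /andP[/eqP h _]; exact: Qbound.
rewrite (cnt_split _ _ (fun v => od v.1.1)).
have -> : cnt (4 * n.+1)%N (fun v => ((Qf v == (4 * n.+1)%N%:Z) && (od (v.1.1 + v.1.2) && od v.2)) && od v.1.1)
  = cnt (4 * n.+1)%N (fun v => (Qf v == (4 * n.+1)%N%:Z) && [&& od v.1.1, ~~ od v.1.2 & od v.2]).
  by apply: cnt_ext => [[[x y] z]]; rewrite /od /=; lia.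
have -> : cnt (4 * n.+1)%N (fun v => ((Qf v == (4 * n.+1)%N%:Z) && (od (v.1.1 + v.1.2) && od v.2)) && ~~ od v.1.1)
  = cnt (4 * n.+1)%N (fun v => (Qf v == (4 * n.+1)%N%:Z) && [&& ~~ od v.1.1, od v.1.2 & od v.2]).
  by apply: cnt_ext => [[[x y] z]]; rewrite /od /=; lia.
rewrite Sx_lem Sy_lem; lia.
Qed.

Lemma I3 n : t 1 1 3 n = muln 2 (Pm (8 * n + 5)%N).
Proof.
rewrite tcnt -A5; last by lia.
apply: (cnt_eq (f := fun v => (2 * v.1.1 + 1, 2 * v.1.2 + 1, 2 * v.2 + 1))
               (g := fun v => (divz (v.1.1 - 1) 2, divz (v.1.2 - 1) 2, divz (v.2 - 1) 2))).
- move=> [[x y] z] /= /eqP h; rewrite /Qf /od /=.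
  have e : (2 * x + 1) ^+ 2 + (2 * y + 1) ^+ 2 + 3 * (2 * z + 1) ^+ 2 =
    4 * (x * (x + 1)) + 4 * (y * (y + 1)) + 12 * (z * (z + 1)) + 5 by ring.
  rewrite e; have := tri2 x; have := tri2 y; have := tri2 z; lia.
- move=> [[x y] z] [[x' y'] z'] /= _ _ [e1 e2 e3]; congr (_, _, _); lia.
- move=> [[u w] Z] /=; rewrite /Qf /od /= => /andP[/eqP h /and3P[h1 h2 h3]].
  have [x [y [z [eu ew eZ]]]] : exists x y z, [/\ u = 2 * x + 1, w = 2 * y + 1 & Z = 2 * z + 1].
    by exists (divz (u - 1) 2), (divz (w - 1) 2), (divz (Z - 1) 2); split; lia.
  subst u w Z.
  have -> : divz (2 * x + 1 - 1) 2 = x by lia.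
  have -> : divz (2 * y + 1 - 1) 2 = y by lia.
  have -> : divz (2 * z + 1 - 1) 2 = z by lia.
  have e : (2 * x + 1) ^+ 2 + (2 * y + 1) ^+ 2 + 3 * (2 * z + 1) ^+ 2 =
    4 * (x * (x + 1)) + 4 * (y * (y + 1)) + 12 * (z * (z + 1)) + 5 by ring.
  rewrite e in h; have := tri2 x; have := tri2 y; have := tri2 z; lia.
- move=> [[x y] z] [[x' y'] z'] /=; rewrite /od => /andP[_ /and3P[h1 h2 h3]] /andP[_ /and3P[h1' h2' h3']] [e1 e2 e3].
  congr (_, _, _); lia.
- move=> [[x y] z] /= /eqP h; rewrite mem_bx /=.
  have := tri_bnd x; have := tri_bnd y; have := tri_bnd z; lia.
- move=> v /andP[/eqP h _]; exact: Qbound.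
Qed.

End Helpers.
Import Helpers.

Theorem theorem3p1 :
  (forall n : nat, 0 < n ->
     [/\ N 1 1 6 (2 * n) = N 1 1 3 n,
         t 1 1 6 (8 * n + 4) = 2 * t 1 1 3 n
       & t 1 1 6 (32 * n + 19) = 4 * t 1 1 3 n]) /\
  (forall n : nat, 0 < n -> n %% 16 != 15 ->
     let T := ((t 1 1 6 n)%:R : rat)%R in
     let M := ((N 1 1 3 n.+1)%:R : rat)%R in
     [/\ (n %% 4 == 1) || (n %% 4 == 2) -> T = (4 * M)%R,
         n %% 8 == 0 -> T = (2 * M)%R,
         (n %% 8 == 4) || (n %% 32 == 19) -> T = M,
         (n %% 16 == 7) || (n %% 16 == 11) -> T = ((8 / 5) * M)%R
       & n %% 32 == 3 -> T = ((4 / 3) * M)%R]).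
Proof.
split.
  move=> n _; split.
  - exact: I1.
  - rewrite I2 I3 (_ : (8 * n + 4).+1 = 8 * n + 5)%N; lia.
  - rewrite I2 I3 (_ : (32 * n + 19).+1 = 4 * (8 * n + 5))%N; last by lia.
    rewrite I5; lia.
move=> n _ h15 T M; rewrite /T /M I2 N113.
split.
- move/orP=> h; rewrite P23; last by lia.
  by rewrite !natrM.
- move=> h; rewrite (P1 (m := n.+1)); last by lia.
  rewrite !natrM; ring.
- move=> /orP [h | h].
    by rewrite (P5 (m := n.+1)); last by lia.
  have [k ek] : exists k, n.+1 = (4 * k)%N by (exists (n.+1 %/ 4); lia).
  rewrite ek I4 I5 P5; last by lia.
  congr (_ %:R)%R; lia.
- move=> h.
  have [k ek] : exists k, n.+1 = (4 * k)%N by (exists (n.+1 %/ 4); lia).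
  rewrite ek I4 I5 P23; last by lia.
  rewrite (_ : (4 * muln 2 (Nm k))%N = (8 * Nm k)%N); last by lia.
  rewrite (_ : (Nm k + 4 * Nm k)%N = (5 * Nm k)%N); last by lia.
  by rewrite !natrM; field.
- move=> h.
  have [k ek] : exists k, n.+1 = (4 * k)%N by (exists (n.+1 %/ 4); lia).
  rewrite ek I4 I5 P1; last by lia.
  rewrite (_ : (4 * muln 2 (Pm k))%N = (8 * Pm k)%N); last by lia.
  rewrite (_ : (muln 2 (Pm k) + 4 * Pm k)%N = (6 * Pm k)%N); last by lia.
  by rewrite !natrM; field.
Qed.
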